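(* Let $\oplus$ be a combinator whose domain is contained in $V(W)$. Then: (1) $\oplus$ satisfies ($\oplus$SPU+) [for all $x,y,z$: if $x \prec_1 y$ and $z \prec_2 y$ then $x \prec_{1\oplus 2} y$ or $z \prec_{1\oplus 2} y$] if and only if it satisfies ($\oplus$SPU) [for all $x,y$: if $x \prec_1 y$ and $x \prec_2 y$ then $x \prec_{1\oplus 2} y$]; (2) $\oplus$ satisfies ($\oplus$WPU+) [for all $x,y,z$: if $x \preceq_1 y$ and $z \preceq_2 y$ then $x \preceq_{1\oplus 2} y$ or $z \preceq_{1\oplus 2} y$] if and only if it satisfies ($\oplus$WPU) [for all $x,y$: if $x \preceq_1 y$ and $x \preceq_2 y$ then $x \preceq_{1\oplus 2} y$]. (All conditions are required for every pair $\langle\preceq_1,\preceq_2\rangle$ in the domain of $\oplus$.)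
   Context: $W$ is a finite nonempty set (of possible worlds). A tpo is a total preorder on $W$; $\prec$ is its strict part. Two tpos $\preceq_1, \preceq_2$ are $S$-variants ($S \subseteq W$) if $x \preceq_1 y \iff x \preceq_2 y$ for all $(x,y) \in (S\times S) \cup (S^c \times S^c)$; $V(W)$ is the set of pairs $\langle\preceq_1,\preceq_2\rangle$ of tpos that are $S$-variants for some $S \subseteq W$. A combinator $\oplus$ maps pairs of tpos in its domain to a tpo $\preceq_{1\oplus 2}$, with strict part $\prec_{1\oplus 2}$. *)

(* Defs.v *)
From mathcomp Require Import all_boot.
Set Implicit Arguments. Unset Strict Implicit. Unset Printing Implicit Defensive.

(* A tpo (total preorder) on W, represented as a boolean relation
   [le x y] meaning x ⪯ y. *)
Definition tpo (W : finType) (le : rel W) : Prop :=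
  (forall x y, le x y || le y x) /\
  (forall x y z, le x y -> le y z -> le x z).

Definition strict (W : finType) (le : rel W) : rel W :=
  fun x y => le x y && ~~ le y x.

Definition S_variants (W : finType) (S : {set W}) (le1 le2 : rel W) : Prop :=
  forall x y : W,
    ((x \in S) && (y \in S)) || ((x \notin S) && (y \notin S)) ->
    (le1 x y = le2 x y).

Definition inV (W : finType) (le1 le2 : rel W) : Prop :=
  tpo le1 /\ tpo le2 /\ exists S : {set W}, S_variants S le1 le2.

Definition combinator (W : finType) (dom : rel W -> rel W -> Prop)
  (comb : rel W -> rel W -> rel W) : Prop :=
  forall le1 le2, dom le1 le2 -> tpo le1 /\ tpo le2 /\ tpo (comb le1 le2).

Definition dom_in_V (W : finType) (dom : rel W -> rel W -> Prop) : Prop :=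
  forall le1 le2, dom le1 le2 -> inV le1 le2.

Definition SPU (W : finType) (dom : rel W -> rel W -> Prop)
  (comb : rel W -> rel W -> rel W) : Prop :=
  forall le1 le2, dom le1 le2 -> forall x y : W,
    strict le1 x y -> strict le2 x y -> strict (comb le1 le2) x y.

Definition SPUplus (W : finType) (dom : rel W -> rel W -> Prop)
  (comb : rel W -> rel W -> rel W) : Prop :=
  forall le1 le2, dom le1 le2 -> forall x y z : W,
    strict le1 x y -> strict le2 z y ->
    strict (comb le1 le2) x y \/ strict (comb le1 le2) z y.

Definition WPU (W : finType) (dom : rel W -> rel W -> Prop)
  (comb : rel W -> rel W -> rel W) : Prop :=
  forall le1 le2, dom le1 le2 -> forall x y : W,
    le1 x y -> le2 x y -> comb le1 le2 x y.

Definition WPUplus (W : finType) (dom : rel W -> rel W -> Prop)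
  (comb : rel W -> rel W -> rel W) : Prop :=
  forall le1 le2, dom le1 le2 -> forall x y z : W,
    le1 x y -> le2 z y ->
    comb le1 le2 x y \/ comb le1 le2 z y.

(* Main.v *)
Require Import Defs.
From mathcomp Require Import all_boot.

Lemma same_eq (W : finType) (S : {set W}) le1 le2 (a b : W) :
  S_variants S le1 le2 -> (a \in S) = (b \in S) -> le1 a b = le2 a b.
Proof.
move=> HS e; apply: HS; rewrite e; by case: (b \in S).
Qed.

Lemma three (W : finType) (S : {set W}) (x y z : W) :
  (x \in S) = (y \in S) \/ (z \in S) = (y \in S) \/ (z \in S) = (x \in S).
Proof.
by case: (x \in S); case: (y \in S); case: (z \in S); auto.
Qed.

Theorem proposition6 (W : finType) (w0 : W)
  (dom : rel W -> rel W -> Prop) (comb : rel W -> rel W -> rel W) :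
  combinator dom comb -> dom_in_V dom ->
  (SPUplus dom comb <-> SPU dom comb) /\
  (WPUplus dom comb <-> WPU dom comb).
Proof.
move=> _ HV; split; split.
- move=> H le1 le2 Hd x y h1 h2.
  by case: (H le1 le2 Hd x y x h1 h2).
- move=> H le1 le2 Hd x y z h1 h2.
  have [[t1 tr1] [[t2 tr2] [S HS]]] := HV _ _ Hd.
  case E1: (strict le2 x y); first by left; apply: H.
  case E2: (strict le1 z y); first by right; apply: H.
  exfalso.
  move: h1 h2 E1 E2; rewrite /strict => /andP [a1 b1] /andP [a2 b2] E1 E2.
  have l2yx : le2 y x.
    case e: (le2 x y) E1; last by move: (t2 x y); rewrite e.
    by rewrite /= => /negbFE.
  have l1yz : le1 y z.
    case e: (le1 z y) E2; last by move: (t1 z y); rewrite e.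
    by rewrite /= => /negbFE.
  case: (@three _ S x y z) => [e|[e|e]].
  + move: E1; rewrite -(@same_eq _ S le1 le2 _ _ HS e) -(@same_eq _ S le1 le2 _ _ HS (esym e)) a1.
    by rewrite (negbTE b1).
  + move: E2; rewrite (@same_eq _ S le1 le2 _ _ HS e) (@same_eq _ S le1 le2 _ _ HS (esym e)) a2.
    by rewrite (negbTE b2).
  + have h : le2 z x by apply: (tr2 _ y).
    rewrite -(@same_eq _ S le1 le2 _ _ HS e) in h.
    by move: b1; rewrite (tr1 _ _ _ l1yz h).
- move=> H le1 le2 Hd x y h1 h2.
  by case: (H le1 le2 Hd x y x h1 h2).
- move=> H le1 le2 Hd x y z h1 h2.
  have [[t1 tr1] [[t2 tr2] [S HS]]] := HV _ _ Hd.
  case E1: (le2 x y); first by left; apply: H.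
  case E2: (le1 z y); first by right; apply: H.
  exfalso.
  have l2yx : le2 y x by move: (t2 x y); rewrite E1.
  case: (@three _ S x y z) => [e|[e|e]].
  + by move: E1; rewrite -(@same_eq _ S le1 le2 _ _ HS e) h1.
  + by move: E2; rewrite (@same_eq _ S le1 le2 _ _ HS e) h2.
  + have h : le2 z x by apply: (tr2 _ y).
    rewrite -(@same_eq _ S le1 le2 _ _ HS e) in h.
    by move: E2; rewrite (tr1 _ _ _ h h1).
Qed.
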